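(* There is an absolute constant $\gamma'>0$ such that the following holds. Let $f:X\times Y\to\{0,1\}$, $b>0$, and let $\nu$ be a balanced distribution on $X\times Y$ such that every rectangle $R\subseteq X\times Y$ with $\nu(R)\ge 2^{-b}$ satisfies $\nu(f^{-1}(1)\mid R)\le 3/4$. Let $k\le b$ and let $f_k(x,y)=(f(x_1,y_1),\dots,f(x_k,y_k))$ on $X^k\times Y^k$. Then every rectangle $R\subseteq X^k\times Y^k$ with $\nu^k(R)\ge 2^{-b/2}$ satisfies $\nu^k(\{(x,y)\in R: f_k(x,y)=c\}\mid R)\le 2^{-\gamma' k}$ for every $c\in\{0,1\}^k$ with at least $k/3$ ones.
   Context: A distribution $\nu$ on $X\times Y$ is balanced for $f$ if $\nu(f^{-1}(0))=\nu(f^{-1}(1))=1/2$. Rectangles are product sets; $\nu^k$ is the $k$-fold product distribution on $X^k\times Y^k$. *)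

(* Defs.v *)
From HB Require Import structures.
From mathcomp Require Import all_boot all_order all_algebra.
From mathcomp Require Import all_classical all_reals.
From mathcomp Require Import exp Rstruct.
Set Implicit Arguments. Unset Strict Implicit. Unset Printing Implicit Defensive.
Import Order.TTheory GRing.Theory Num.Theory.
Local Open Scope ring_scope.

Notation RR := Rdefinitions.R.

Definition is_distr (T : finType) (nu : {ffun T -> RR}) : Prop :=
  (forall t, 0 <= nu t) /\ \sum_(t : T) nu t = 1.

Definition prob (T : finType) (nu : {ffun T -> RR}) (S : {set T}) : RR :=
  \sum_(t in S) nu t.

Definition cprob (T : finType) (nu : {ffun T -> RR}) (S C : {set T}) : RR :=
  prob nu (S :&: C) / prob nu C.

Definition fpre (X Y : finType) (f : X -> Y -> bool) (v : bool) : {set X * Y} :=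
  [set p | f p.1 p.2 == v].

Definition balanced (X Y : finType) (f : X -> Y -> bool) (nu : {ffun X * Y -> RR}) : Prop :=
  prob nu (fpre f false) = 1 / 2 /\ prob nu (fpre f true) = 1 / 2.

Definition rect (X Y : finType) (A : {set X}) (B : {set Y}) : {set X * Y} := finset.setX A B.

Notation pow k X := {ffun 'I_k -> X}.

Definition prod_distr (X Y : finType) (k : nat) (nu : {ffun X * Y -> RR}) :
  {ffun (pow k X) * (pow k Y) -> RR} :=
  [ffun p : pow k X * pow k Y => \prod_(i < k) nu (p.1 i, p.2 i)].

Definition fk (X Y : finType) (k : nat) (f : X -> Y -> bool)
  (x : pow k X) (y : pow k Y) : pow k bool :=
  [ffun i => f (x i) (y i)].

Definition ones (k : nat) (c : pow k bool) : nat := #|[set i | c i]|.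

(* Main.v *)
Require Import Defs.
From HB Require Import structures.
From mathcomp Require Import all_boot all_order all_algebra.
From mathcomp Require Import all_classical all_reals.
From mathcomp Require Import exp Rstruct.
From mathcomp Require Import ring lra.
Import Order.TTheory GRing.Theory Num.Theory.
Set Implicit Arguments. Unset Strict Implicit. Unset Printing Implicit Defensive.
Local Open Scope ring_scope.

Definition upd (T : Type) (k : nat) (x : {ffun 'I_k -> T}) (i : 'I_k) (a : T) : {ffun 'I_k -> T} :=
  [ffun j => if j == i then a else x j].

Definition updp (X Y : finType) k (p : pow k X * pow k Y) (i : 'I_k) (ab : X * Y) :=
  (upd p.1 i ab.1, upd p.2 i ab.2).

Definition atp (X Y : finType) k (p : pow k X * pow k Y) (i : 'I_k) : X * Y :=
  (p.1 i, p.2 i).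

Lemma upd_upd (T : Type) k (x : {ffun 'I_k -> T}) i a a' : upd (upd x i a) i a' = upd x i a'.
Proof. by apply/ffunP => j; rewrite !ffunE; case: (j == i). Qed.

Lemma upd_id (T : Type) k (x : {ffun 'I_k -> T}) i : upd x i (x i) = x.
Proof. by apply/ffunP => j; rewrite !ffunE; case: eqP => // ->. Qed.

Lemma slice (X Y : finType) k (F : pow k X * pow k Y -> RR) (i : 'I_k) (ab0 : X * Y) :
  \sum_p F p = \sum_(q | atp q i == ab0) \sum_(ab : X * Y) F (updp q i ab).
Proof.
rewrite (partition_big (fun p => atp p i) predT) //=.
rewrite (exchange_big _ _ _ (fun q => atp q i == ab0)) /=.
apply: eq_bigr => ab _.
rewrite (reindex_onto (fun q => updp q i ab) (fun p => updp p i ab0)) /=.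
  apply: eq_bigl => q.
  have -> : atp (updp q i ab) i == ab by rewrite /atp /updp /upd /= !ffunE eqxx; case: ab.
  rewrite /updp /= !upd_upd /=.
  case: q => x y /=; rewrite /atp /=.
  apply/idP/idP.
    move=> /eqP [hx hy]. by rewrite -hx -hy !ffunE !eqxx; case: ab0 {hx hy}.
  move=> /eqP <- /=. by rewrite !upd_id.
move=> [x y] /eqP; rewrite /atp /updp /= => <-.
by rewrite !upd_upd !upd_id.
Qed.

Lemma mu_upd (X Y : finType) k (nu : {ffun X * Y -> RR}) (q : pow k X * pow k Y) i ab :
  prod_distr k nu (updp q i ab) = nu ab * \prod_(j | j != i) nu (q.1 j, q.2 j).
Proof.
rewrite ffunE (bigD1 i) //= !ffunE eqxx; case: ab => a b; congr (_ * _).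
apply: eq_bigr => j /negbTE hj; by rewrite !ffunE hj.
Qed.

Lemma sum_mu (X Y : finType) k (nu : {ffun X * Y -> RR}) :
  is_distr nu -> \sum_p prod_distr k nu p = 1.
Proof.
move=> [_ h1].
pose h (g : {ffun 'I_k -> X * Y}) : pow k X * pow k Y :=
  ([ffun j => (g j).1], [ffun j => (g j).2]).
pose h' (p : pow k X * pow k Y) : {ffun 'I_k -> X * Y} := [ffun j => (p.1 j, p.2 j)].
rewrite (reindex h); last first.
  exists h' => [g _|p _]; rewrite /=; try apply/ffunP.
    by move=> j; rewrite /h /h' !ffunE; case: (g j).
  case: p => x y; rewrite /h /h' /=; congr pair; apply/ffunP => j; by rewrite !ffunE.
rewrite /=.
transitivity (\sum_(g : {ffun 'I_k -> X * Y}) \prod_(i < k) nu (g i)).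
  apply: eq_bigr => g _; rewrite ffunE; apply: eq_bigr => j _; by rewrite !ffunE; case: (g j).
rewrite -(bigA_distr_bigA (fun (i : 'I_k) (ab : X * Y) => nu ab)) /=.
by rewrite big1 // => i _.
Qed.

Lemma mu_ge0 (X Y : finType) k (nu : {ffun X * Y -> RR}) p :
  is_distr nu -> 0 <= prod_distr k nu p.
Proof. by move=> [h _]; rewrite ffunE; apply: prodr_ge0 => j _. Qed.

Definition Dset (X Y : finType) k (f : X -> Y -> bool) (s : seq 'I_k) : {set pow k X * pow k Y} :=
  [set p : pow k X * pow k Y | all (fun j => f (p.1 j) (p.2 j)) s].

Lemma Dset_upd (X Y : finType) k (f : X -> Y -> bool) (s : seq 'I_k) i q ab :
  i \notin s -> (updp q i ab \in Dset f s) = (q \in Dset f s).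
Proof.
move=> his; rewrite !inE; apply: eq_in_all => j hj.
have hji : (j == i) = false by apply/negbTE; apply: contraNneq his => <-.
by rewrite /updp /upd /= !ffunE hji.
Qed.

Lemma inner_sum (X Y : finType) (nu : {ffun X * Y -> RR}) (c : bool) (S : {set X * Y}) (w : RR) :
  \sum_(ab : X * Y) (if c && (ab \in S) then nu ab * w else 0) =
  (if c then w * prob nu S else 0).
Proof.
case: c => /=; last by rewrite big1.
rewrite /prob big_distrr /= [RHS]big_mkcond; apply: eq_bigr => ab _ /=.
by case: (ab \in S); rewrite ?mulr0 // mulrC.
Qed.

Lemma step (X Y : finType) (f : X -> Y -> bool) (nu : {ffun X * Y -> RR}) (d : RR) k
  (A : {set pow k X}) (B : {set pow k Y}) (i : 'I_k) (s : seq 'I_k) (ab0 : X * Y) :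
  is_distr nu -> 0 < d ->
  (forall (A' : {set X}) (B' : {set Y}), prob nu (rect A' B') >= d ->
     cprob nu (fpre f true) (rect A' B') <= 3/4) ->
  i \notin s ->
  prob (prod_distr k nu) (rect A B :&: Dset f (i :: s)) <=
    3/4 * prob (prod_distr k nu) (rect A B :&: Dset f s) + d/4.
Proof.
move=> hnu hd H his.
have [nu0 nu1] := hnu.
pose w (q : pow k X * pow k Y) := \prod_(j | j != i) nu (q.1 j, q.2 j).
have w0 : forall q, 0 <= w q by move=> q; apply: prodr_ge0.
pose Aq (q : pow k X * pow k Y) := [set a | upd q.1 i a \in A].
pose Bq (q : pow k X * pow k Y) := [set b | upd q.2 i b \in B].
have eR : forall q ab, (updp q i ab \in rect A B) = (ab \in rect (Aq q) (Bq q)).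
  by move=> q [a b]; rewrite /rect !finset.in_setX /= !inE.
have e1 : forall q ab, (updp q i ab \in rect A B :&: Dset f (i :: s)) =
    (q \in Dset f s) && (ab \in fpre f true :&: rect (Aq q) (Bq q)).
  move=> q [a b].
  rewrite finset.in_setI eR.
  have -> : (updp q i (a, b) \in Dset f (i :: s)) = f a b && (updp q i (a, b) \in Dset f s).
    by rewrite !inE /= /updp /upd /= !ffunE eqxx.
  rewrite Dset_upd // finset.in_setI !inE /=.
  by case: (f a b); case: (all _ s); case: (upd q.1 i a \in A); case: (upd q.2 i b \in B).
have e0 : forall q ab, (updp q i ab \in rect A B :&: Dset f s) =
    (q \in Dset f s) && (ab \in rect (Aq q) (Bq q)).
  by move=> q ab; rewrite finset.in_setI eR Dset_upd // andbC.
have sumw : \sum_(q | atp q i == ab0) w q = 1.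
  rewrite -(sum_mu k hnu) (slice _ i ab0); apply: eq_bigr => q _.
  under eq_bigr do rewrite mu_upd.
  by rewrite -big_distrl /= nu1 mul1r.
rewrite /prob big_mkcond (slice _ i ab0) /=.
rewrite [X in 3/4 * X]big_mkcond (slice _ i ab0) /=.
under eq_bigr => q _.
  under eq_bigr => ab _ do rewrite e1 mu_upd -if_neg -if_neg negbK.
  over.
rewrite /=.
under [X in _ <= 3/4 * X + _]eq_bigr => q _.
  under eq_bigr => ab _ do rewrite e0 mu_upd.
  rewrite inner_sum.
  over.
under eq_bigr => q _ do rewrite inner_sum.
rewrite /=.
apply: (@le_trans _ _ (\sum_(q | atp q i == ab0) (3/4 * (if q \in Dset f s then w q * prob nu (rect (Aq q) (Bq q)) else 0) + d/4 * w q))).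
  apply: ler_sum => q _; case: ifP => _; last first.
    by rewrite mulr0 add0r; apply: mulr_ge0 => //; lra.
  set pR := prob nu (rect (Aq q) (Bq q)).
  set p1 := prob nu (fpre f true :&: rect (Aq q) (Bq q)).
  have hp1 : p1 <= pR.
    rewrite /p1 /pR /prob [leRHS](bigID (fun ab => ab \in fpre f true)) /=.
    have -> : \sum_(t in fpre f true :&: rect (Aq q) (Bq q)) nu t =
              \sum_(t in rect (Aq q) (Bq q) | t \in fpre f true) nu t.
      by apply: eq_bigl => t; rewrite finset.in_setI andbC.
    rewrite lerDl; apply: sumr_ge0 => t _; exact: nu0.
  have key : p1 <= 3/4 * pR + d/4.
    case: (lerP d pR) => hdR.
      have := H (Aq q) (Bq q) hdR; rewrite /cprob -/p1 -/pR => hc.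
      have pRpos : 0 < pR by lra.
      rewrite ler_pdivrMr // in hc. lra.
    lra.
  have := w0 q; rewrite -/(w q); nra.
rewrite big_split /= -!big_distrr /= sumw. lra.
Qed.

Lemma num9 : 2 * (91/100 : RR) ^+ 9 <= (99/100) ^+ 9.
Proof. rewrite !exprS expr0. lra. Qed.

Lemma numsmall (k : nat) : (k < 9)%N ->
  (1 - (71/100 : RR) ^+ k) * (91/100) ^+ k + (71/100) ^+ k <= (99/100) ^+ k.
Proof.
do 9 (case: k => [_|k]; [rewrite ?exprS ?expr0; lra|]). by [].
Qed.

Lemma numall (k : nat) :
  (1 - (71/100 : RR) ^+ k) * (91/100) ^+ k + (71/100) ^+ k <= (99/100) ^+ k.
Proof.
case: (ltnP k 9) => hk; first exact: numsmall.
have hv : (71/100 : RR) ^+ k <= (91/100) ^+ k.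
  by apply: lerXn2r; rewrite ?inE ?nnegrE; lra.
have h0 : 0 <= (71/100 : RR) ^+ k * (91/100) ^+ k.
  by apply: mulr_ge0; apply: exprn_ge0; lra.
have h1 : 2 * (91/100 : RR) ^+ k <= (99/100) ^+ k.
  rewrite -(subnKC hk) !exprD mulrA.
  apply: ler_pM; [|apply: exprn_ge0; lra|exact: num9|].
  - apply: mulr_ge0; [lra|apply: exprn_ge0; lra].
  - by apply: lerXn2r; rewrite ?inE ?nnegrE; lra.
lra.
Qed.

Lemma bern (x : RR) (n : nat) : 0 <= x -> 1 + n%:R * x <= (1 + x) ^+ n.
Proof.
move=> hx; elim: n => [|n IH]; first by rewrite expr0; lra.
rewrite exprS -natr1.
have h : 0 <= n%:R * x by apply: mulr_ge0.
have h2 : 0 <= n%:R * x * x by apply: mulr_ge0.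
nra.
Qed.

Lemma gam_bound : (99/100 : RR) <= powR 2 (- (1/100)).
Proof.
rewrite powRN.
set t := powR 2 (1/100).
have tpos : 0 < t by apply: powR_gt0.
have t100 : t ^+ 100 = 2.
  rewrite /t -powR_mulrn; last exact: powR_ge0.
  rewrite -powRrM; have -> : (1/100 : RR) * 100%:R = 1 by field. 
  by rewrite powRr1.
have : t <= 100/99.
  rewrite leNgt; apply/negP => ht.
  have := @bern (1/99) 100.
  have -> : (1 + 1/99 : RR) = 100/99 by field.
  move=> hb; have {hb} hb := hb ltac:(lra).
  have : (100/99 : RR) ^+ 100 < t ^+ 100.
    by apply: ltrXn2r => //; lra.
  rewrite t100 => h. have : 1 + 100%:R * (1/99 : RR) <= 2 by lra.
  lra.
move=> ht.
rewrite -[99/100]invrK. rewrite lef_pV2 ?posrE //; try lra.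
Qed.

Lemma half_bound : powR 2 (- (1/2)) <= (71/100 : RR).
Proof.
rewrite powRN.
set t := powR 2 (1/2).
have tpos : 0 < t by apply: powR_gt0.
have t2 : t ^+ 2 = 2.
  rewrite /t -powR_mulrn; last exact: powR_ge0.
  rewrite -powRrM; have -> : (1/2 : RR) * 2%:R = 1 by field.
  by rewrite powRr1.
have ht : 100/71 <= t.
  rewrite leNgt; apply/negP => ht.
  have : t ^+ 2 < (100/71) ^+ 2 by apply: ltrXn2r => //; lra.
  rewrite t2 !exprS expr0; lra.
rewrite -[71/100]invrK lef_pV2 ?posrE //; try lra.
Qed.

Lemma prob_mono (T : finType) (nu : {ffun T -> RR}) (S U : {set T}) :
  (forall t, 0 <= nu t) -> S \subset U -> prob nu S <= prob nu U.
Proof.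
move=> h0 hSU; rewrite /prob [leRHS](bigID (fun t => t \in S)) /=.
have -> : \sum_(t in U | t \in S) nu t = \sum_(t in S) nu t.
  apply: eq_bigl => t; apply/andP/idP => [[]//|hs]; split => //.
  by apply: (fintype.subsetP hSU).
rewrite lerDl; apply: sumr_ge0 => t _; exact: h0.
Qed.

Lemma iter (X Y : finType) (f : X -> Y -> bool) (nu : {ffun X * Y -> RR}) (d : RR) k
  (A : {set pow k X}) (B : {set pow k Y}) (s : seq 'I_k) (ab0 : X * Y) :
  is_distr nu -> 0 < d ->
  (forall (A' : {set X}) (B' : {set Y}), prob nu (rect A' B') >= d ->
     cprob nu (fpre f true) (rect A' B') <= 3/4) ->
  uniq s ->
  prob (prod_distr k nu) (rect A B :&: Dset f s) <=
    (3/4) ^+ (size s) * (prob (prod_distr k nu) (rect A B) - d) + d.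
Proof.
move=> hnu hd H; elim: s => [|i s IH].
  move=> _; have -> : rect A B :&: Dset f [::] = rect A B.
    by apply/setP => p; rewrite !inE andbT.
  rewrite expr0; lra.
move=> /= /andP [his hu].
have := @step _ _ f nu d k A B i s ab0 hnu hd H his.
have := IH hu. rewrite exprS.
set P0 := prob _ (rect A B :&: Dset f s).
set P1 := prob _ (rect A B :&: Dset f (i :: s)).
set q := (3/4 : RR) ^+ size s.
move=> h1 h2.
have : 3/4 * P0 <= 3/4 * (q * (prob (prod_distr k nu) (rect A B) - d) + d) by lra.
lra.
Qed.

Theorem mainTheorem11 :
  exists gamma' : RR, 0 < gamma' /\
  forall (X Y : finType) (f : X -> Y -> bool) (b : RR) (nu : {ffun X * Y -> RR}),
    0 < b ->
    is_distr nu ->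
    balanced f nu ->
    (forall (A : {set X}) (B : {set Y}),
        prob nu (rect A B) >= powR 2 (- b) ->
        cprob nu (fpre f true) (rect A B) <= 3 / 4) ->
    forall k : nat, k%:R <= b ->
    forall (A : {set pow k X}) (B : {set pow k Y}),
      prob (prod_distr k nu) (rect A B) >= powR 2 (- (b / 2)) ->
      forall c : pow k bool, (k <= 3 * ones c)%N ->
        cprob (prod_distr k nu)
              [set p | fk f p.1 p.2 == c] (rect A B)
          <= powR 2 (- (gamma' * k%:R)).
Proof.
exists (1/100); split; first lra.
move=> X Y f b nu hb hnu _ H k hk A B hR c hc.
have [nu0 nu1] := hnu.
have [ab0 _|hempty] := pickP (@predT (X * Y)); last first.
  by move: nu1; rewrite big_pred0 // => /eqP; rewrite eq_sym oner_eq0.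
set d := powR 2 (- b).
have hd : 0 < d by apply: powR_gt0.
set mu := prod_distr k nu.
set I := [set i | c i].
set s := enum I.
set x := prob mu (rect A B).
set s0 := powR 2 (- (b / 2)).
have s0pos : 0 < s0 by apply: powR_gt0.
have hR' : s0 <= x := hR.
have xpos : 0 < x by lra.
set P := prob mu ([set p | fk f p.1 p.2 == c] :&: rect A B).
have hsub : P <= prob mu (rect A B :&: Dset f s).
  apply: prob_mono; first by move=> p; apply: mu_ge0.
  apply/fintype.subsetP => p; rewrite !inE => /andP [/eqP hfk hr].
  rewrite hr /=; apply/allP => j; rewrite mem_enum inE => hj.
  by move: hj; rewrite -hfk ffunE.
have hit := @iter _ _ f nu d k A B s ab0 hnu hd H (enum_uniq _).
rewrite -/mu -/x -cardE in hit.
set m := #|I| in hit.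
set a := (3/4 : RR) ^+ m.
set e := d / x.
have ex : e * x = d by rewrite /e divfK //; lra.
have hit' : prob mu (rect A B :&: Dset f s) <= a * (x - d) + d := hit.
have ha : a <= (91/100) ^+ k.
  apply: (@le_trans _ _ ((91/100) ^+ (3 * m))).
    have h3 : (3/4:RR) <= (91/100)^+3 by rewrite !exprS expr0; lra.
    have h3' : (0:RR) <= (91/100)^+3 by apply: exprn_ge0; lra.
    rewrite exprM; apply: lerXn2r; rewrite ?inE ?nnegrE //; lra.
  apply: ler_wiXn2l; try lra. exact: hc.
have he : e <= (71/100) ^+ k.
  have h1 : e <= d / s0.
    rewrite /e; apply: ler_pM; try lra.
    - by rewrite invr_ge0; lra.
    - by rewrite lef_pV2 ?posrE //; lra.
  have h2 : d / s0 = powR (2:RR) (- (b / 2)).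
    rewrite /d /s0 -powRB; last by apply/implyP => _; rewrite pnatr_eq0.
    by congr powR; field.
  have h3 : powR (2:RR) (- (b / 2)) <= powR 2 (- (1/2)) ^+ k.
    rewrite -powR_mulrn ?powR_ge0 // -powRrM.
    apply: ler_powR; first lra.
    rewrite mulNr; rewrite lerN2. rewrite mulrC. lra.
  have h4 : powR (2:RR) (- (1/2)) ^+ k <= (71/100) ^+ k.
    have hh := half_bound.
    apply: (@lerXn2r RR k (powR 2 (-(1/2))) (71/100)); rewrite ?inE ?nnegrE ?powR_ge0 //; lra.
  lra.
have hg : (99/100 : RR) ^+ k <= powR 2 (- (1 / 100 * k%:R)).
  rewrite -mulNr powRrM powR_mulrn ?powR_ge0 //.
  have hh := gam_bound.
  apply: (@lerXn2r RR k (99/100) (powR 2 (-(1/100)))); rewrite ?inE ?nnegrE ?powR_ge0 //; lra.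
have hn := numall k.
rewrite /cprob -/P -/mu -/x.
have a0 : 0 <= a by apply: exprn_ge0; lra.
have e0 : 0 <= e by rewrite /e; apply: divr_ge0; lra.
have V1 : (71/100 : RR) ^+ k <= 1 by apply: exprn_ile1; lra.
have U1 : (91/100 : RR) ^+ k <= 1 by apply: exprn_ile1; lra.
have hPx : P / x <= a * (1 - e) + e.
  rewrite ler_pdivrMr //.
  have -> : (a * (1 - e) + e) * x = a * (x - d) + d.
    by rewrite -ex; ring.
  lra.
have hU : a * (1 - e) <= (91/100) ^+ k * (1 - e) by apply: ler_wpM2r; lra.
have hV : e * (1 - (91/100) ^+ k) <= (71/100) ^+ k * (1 - (91/100) ^+ k)
  by apply: ler_wpM2r; lra.
set U := (91/100 : RR) ^+ k in hU hV hn U1 ha.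
set V := (71/100 : RR) ^+ k in hV hn V1 he.
have : a * (1 - e) + e <= (1 - V) * U + V.
  have -> : (1 - V) * U + V = U * 1 - V * U + V by ring.
  nra.
lra.
Qed.
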